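(* In the uKP setting described in the context, fix integers $s,l,m,n$. For $0\le k_2,k_3\le N$ define \[ \Psi(k_2,k_3)=\begin{cases} \max_{0\le i\le N-k_3}\tau_c(N-k_3-i,\,N-k_2+1+i) & (k_3\ge k_2 \text{ and } k_3\ge N-k_2),\\ \max_{0\le i\le k_2}\tau_c(N-k_2-k_3+i,\,N+1-i) & (N-k_2\ge k_3\ge k_2),\\ \max_{0\le i\le N-k_2}\tau_c(N-k_2-i,\,N-k_3+1+i) & (k_2\ge k_3\ge N-k_2),\\ \max_{0\le i\le k_3}\tau_c(N-k_2-k_3+i,\,N+1-i) & (k_2\ge k_3 \text{ and } N-k_2\ge k_3). \end{cases} \] Then \[ \tau(l,m+1,n+1)=\max_{0\le k_2,k_3\le N}\bigl(\Psi(k_2,k_3)-k_2a_2-k_3a_3\bigr), \] and for $1\le k_2,k_3\le N$: $\Psi(k_2-1,k_3)=\max(\Psi(k_2,k_3-1),\ \tau_c(N-k_3+1,N-k_2+1))$ if $k_2>k_3$; $\Psi(k_2-1,k_3)=\Psi(k_2,k_3-1)$ if $k_2=k_3$; $\max(\Psi(k_2-1,k_3),\ \tau_c(N-k_2+1,N-k_3+1))=\Psi(k_2,k_3-1)$ if $k_2<k_3$.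
   Context: Ultradiscrete permanent (UP): for a real $N\times N$ matrix $A=(a_{ij})$, $\max A\equiv\max_{\pi}\sum_{i=1}^N a_{i\pi(i)}$ over all permutations $\pi$ of $\{1,\dots,N\}$; $\max[\bm{b}_1\ \dots\ \bm{b}_N]$ is the UP of the matrix with columns $\bm{b}_j$. uKP setting: $N\ge1$; real parameters $a_1>a_2>a_3$ and arbitrary real $p_i,c_i,c'_i$ ($1\le i\le N$); for integers $l,m,n,s$, $\eta_i(l,m,n,s)=p_is+\max(0,p_i-a_1)l+\max(0,p_i-a_2)m+\max(0,p_i-a_3)n+c_i$, $\eta'_i(l,m,n,s)=-p_is+\max(0,-p_i-a_1)l+\max(0,-p_i-a_2)m+\max(0,-p_i-a_3)n+c'_i$, $\phi_i(l,m,n,s)=\max(\eta_i,\eta'_i)$, and $\tau(l,m,n)=\max[\phi_i(l,m,n,s+j-1)]_{1\le i,j\le N}$ ($s$ an auxiliary fixed integer). With $l,m,n,s$ fixed, put $\bm{\phi}(j)=(\phi_i(l,m,n,s+j))_{1\le i\le N}$, and for distinct $\alpha,\beta\in\{0,\dots,N+1\}$ let $\tau_c(\alpha,\beta)$ be the UP of the $N$ columns $\bm{\phi}(j)$, $j\in\{0,\dots,N+1\}\setminus\{\alpha,\beta\}$, taken in increasing order of $j$ (so $\tau_c(\alpha,\beta)=\tau_c(\beta,\alpha)$). *)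

(* Defs.v *)
From mathcomp Require Import all_boot all_order all_algebra all_fingroup.
From mathcomp Require Import reals.
Set Implicit Arguments. Unset Strict Implicit. Unset Printing Implicit Defensive.
Import Order.TTheory GRing.Theory Num.Theory.
Local Open Scope ring_scope.

Section UKP.
Variable R : realType.

(* max_{0 <= i <= K} F i  (a nonempty range; F 0 is used as the neutral start,
   which is harmless since max is idempotent). *)
Definition maxupto (K : nat) (F : nat -> R) : R :=
  \big[Num.max/F 0%N]_(0 <= i < K.+1) F i.

(* Ultradiscrete permanent: max over permutations pi of sum_i A i (pi i).
   The start value is the identity-permutation term (max is idempotent). *)
Definition UP (N : nat) (A : 'M[R]_N) : R :=
  \big[Num.max/(\sum_(i < N) A i i)]_(pi : 'S_N) \sum_(i < N) A i (pi i).

Variables (N : nat) (a1 a2 a3 : R) (p c c' : 'I_N -> R).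

Definition eta (i : 'I_N) (l m n s : int) : R :=
  p i * s%:~R + Num.max 0 (p i - a1) * l%:~R + Num.max 0 (p i - a2) * m%:~R
  + Num.max 0 (p i - a3) * n%:~R + c i.

Definition eta' (i : 'I_N) (l m n s : int) : R :=
  - p i * s%:~R + Num.max 0 (- p i - a1) * l%:~R + Num.max 0 (- p i - a2) * m%:~R
  + Num.max 0 (- p i - a3) * n%:~R + c' i.

Definition phi (i : 'I_N) (l m n s : int) : R :=
  Num.max (eta i l m n s) (eta' i l m n s).

(* tau(l,m,n) = UP [phi_i(l,m,n,s+j-1)]_{1<=i,j<=N}; with 0-based column
   index j : 'I_N the entry is phi_i(l,m,n,s+j). *)
Definition tau (l m n s : int) : R :=
  UP (\matrix_(i < N, j < N) phi i l m n (s + (j : nat)%:Z)).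

Definition tauc_cols (alpha beta : nat) : seq nat :=
  [seq j <- iota 0 N.+2 | (j != alpha) && (j != beta)].

Definition tauc (l m n s : int) (alpha beta : nat) : R :=
  UP (\matrix_(i < N, k < N)
        phi i l m n (s + (nth 0%N (tauc_cols alpha beta) k)%:Z)).

(* Psi(k2,k3), cases tested in the order given in the paper
   (the cases agree on their overlaps). *)
Definition Psi (l m n s : int) (k2 k3 : nat) : R :=
  if (k2 <= k3)%N && (N - k2 <= k3)%N then
    maxupto (N - k3) (fun i => tauc l m n s (N - k3 - i) (N - k2 + 1 + i))
  else if (k2 <= k3)%N && (k3 <= N - k2)%N then
    maxupto k2 (fun i => tauc l m n s (N - k2 - k3 + i) (N + 1 - i))
  else if (N - k2 <= k3)%N && (k3 <= k2)%N then
    maxupto (N - k2) (fun i => tauc l m n s (N - k2 - i) (N - k3 + 1 + i))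
  else
    maxupto k3 (fun i => tauc l m n s (N - k2 - k3 + i) (N + 1 - i)).

End UKP.

(* Main.v *)
Require Import Defs.
From mathcomp Require Import all_boot all_order all_algebra all_fingroup.
From mathcomp Require Import reals.
From mathcomp Require Import ring lra zify.
Import Order.TTheory GRing.Theory Num.Theory.
Local Open Scope ring_scope.
Set Implicit Arguments. Unset Strict Implicit.

Lemma bmax_ge (R : realType) (I : eqType) (r : seq I) (F : I -> R) x0 j :
  j \in r -> F j <= \big[Num.max/x0]_(i <- r) F i.
Proof.
elim: r => [//|a r IH]; rewrite inE big_cons => /orP [/eqP->|/IH h].
  by rewrite le_max lexx.
by rewrite le_max h orbT.
Qed.

Lemma bmax_le (R : realType) (I : eqType) (r : seq I) (F : I -> R) x0 z :
  x0 <= z -> (forall j, j \in r -> F j <= z) -> \big[Num.max/x0]_(i <- r) F i <= z.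
Proof.
move=> h0; elim: r => [|a r IH] H; first by rewrite big_nil.
rewrite big_cons ge_max H ?inE ?eqxx //=.
by apply: IH => j hj; apply: H; rewrite inE hj orbT.
Qed.

Lemma bmax_ex (R : realType) (I : eqType) (r : seq I) (F : I -> R) x0 :
  \big[Num.max/x0]_(i <- r) F i = x0 \/ exists2 j, j \in r & \big[Num.max/x0]_(i <- r) F i = F j.
Proof.
elim: r => [|a r IH]; first by left; rewrite big_nil.
rewrite big_cons; case: (leP (F a) (\big[Num.max/x0]_(i <- r) F i)) => _.
  case: IH => [->|[j hj ->]]; [by left | by right; exists j; rewrite // inE hj orbT].
by right; exists a; rewrite ?inE ?eqxx.
Qed.

Lemma maxupto_ge (R : realType) K (F : nat -> R) i : (i <= K)%N -> F i <= maxupto K F.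
Proof. by move=> h; apply: bmax_ge; rewrite mem_index_iota. Qed.

Lemma maxupto_le (R : realType) K (F : nat -> R) z :
  (forall i, (i <= K)%N -> F i <= z) -> maxupto K F <= z.
Proof.
move=> H; apply: bmax_le; first exact: H.
by move=> j; rewrite mem_index_iota => /andP[_ h]; apply: H.
Qed.

Lemma UP_ge (R : realType) N (A : 'M[R]_N) (pi : 'S_N) : \sum_i A i (pi i) <= UP A.
Proof. by apply: bmax_ge; rewrite mem_index_enum. Qed.

Lemma UP_ex (R : realType) N (A : 'M[R]_N) : exists pi : 'S_N, UP A = \sum_i A i (pi i).
Proof.
case: (@bmax_ex _ _ (index_enum 'S_N) (fun pi : 'S_N => \sum_i A i (pi i)) (\sum_(i < N) A i i)).
  by rewrite /UP => ->; exists 1%g; apply: eq_bigr => i _; rewrite perm1.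
by case=> pi _ h; exists pi.
Qed.

Lemma UP_le (R : realType) N (A : 'M[R]_N) z : (forall pi : 'S_N, \sum_i A i (pi i) <= z) -> UP A <= z.
Proof. by move=> H; case: (@UP_ex _ _ A) => pi ->; apply: H. Qed.

Definition Phi (R : realType) N (f : 'I_N -> nat -> R) (c : nat -> nat) : R :=
  UP (\matrix_(i < N, k < N) f i (c k)).

Lemma Phi_ext (R : realType) N (f : 'I_N -> nat -> R) c c' :
  (forall k, (k < N)%N -> c k = c' k) -> Phi f c = Phi f c'.
Proof.
by move=> H; rewrite /Phi; congr UP; apply/matrixP => i k; rewrite !mxE H.
Qed.

Lemma sum3 (R : realType) N (F : 'I_N -> R) r q : r != q ->
  \sum_i F i = F r + F q + \sum_(i | (i != r) && (i != q)) F i.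
Proof.
move=> rq; rewrite (bigD1 r) //= (bigD1 q) /=; last by rewrite eq_sym.
by rewrite addrA.
Qed.

Lemma Phi_move (R : realType) N (f : 'I_N -> nat -> R)
  (hconv : forall i t, f i t.+1 + f i t.+1 <= f i t + f i t.+2)
  c c' a b : (a < N)%N -> (b < N)%N -> a != b ->
  (forall k, k != a -> k != b -> c' k = c k) ->
  ((c' a = c b /\ c' b = c a) \/
   (c a = c b /\ c' a = (c a).-1 /\ c' b = (c a).+1 /\ (0 < c a)%N)) ->
  Phi f c <= Phi f c'.
Proof.
move=> ha hb hab Hk Hc.
rewrite /Phi; case: (UP_ex (\matrix_(i < N, k < N) f i (c k))) => pi ->.
pose a' := Ordinal ha; pose b' := Ordinal hb.
have ab' : a' != b' by [].
pose r := (pi^-1 a')%g; pose q := (pi^-1 b')%g.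
have pir : pi r = a' by rewrite /r permKV.
have piq : pi q = b' by rewrite /q permKV.
have rq : r != q by apply: contra ab' => /eqP e; rewrite -pir e piq.
have Hrest : forall i, i != r -> i != q -> c' (pi i) = c (pi i).
  move=> i hr hq; apply: Hk.
    by apply: contra hr => /eqP e; apply/eqP; rewrite /r -(permK pi i); congr (_ _); apply/val_inj.
  by apply: contra hq => /eqP e; apply/eqP; rewrite /q -(permK pi i); congr (_ _); apply/val_inj.
set M' := \matrix_(i < N, k < N) f i (c' k).
set rest := \sum_(i | (i != r) && (i != q)) f i (c (pi i)).
have h1 : \sum_i M' i (pi i) = f r (c' a) + f q (c' b) + rest.
  rewrite (sum3 _ rq) !mxE pir piq; congr (_ + _).
  by apply: eq_bigr => i /andP[hr hq]; rewrite !mxE Hrest.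
have h2 : \sum_i M' i ((pi * tperm a' b')%g i) = f r (c' b) + f q (c' a) + rest.
  rewrite (sum3 _ rq) !mxE !permM pir piq tpermL tpermR; congr (_ + _).
  apply: eq_bigr => i /andP[hr hq]; rewrite !mxE permM tpermD ?Hrest //.
    by apply: contra hr => /eqP e; apply/eqP; rewrite /r e permK.
  by apply: contra hq => /eqP e; apply/eqP; rewrite /q e permK.
have g1 := UP_ge M' pi; have g2 := UP_ge M' (pi * tperm a' b')%g.
rewrite h1 in g1; rewrite h2 in g2.
rewrite (sum3 _ rq) !mxE pir piq.
have -> : \sum_(i | (i != r) && (i != q)) (\matrix_(i0, k) f i0 (c k)) i (pi i) = rest.
  by apply: eq_bigr => i _; rewrite mxE.
rewrite /=.
case: Hc => [[e1 e2]|[e1 [e2 [e3 e4]]]].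
  by apply: le_trans g2; rewrite e1 e2.
rewrite e2 e3 in g1 g2; rewrite -e1 in g1 g2 *.
move: (c a) e4 g1 g2 => [//|t] _ /= g1 g2.
have := hconv r t; have := hconv q t.
case: (lerP (f r t + f q t.+2) (f r t.+2 + f q t)) => h hq hr.
  apply: le_trans g2; lra.
apply: le_trans g1; lra.
Qed.

Close Scope ring_scope.

Lemma sum_ge n a : \sum_(0 <= k < n) (a <= k) = n - a.
Proof.
elim: n => [|n IH]; first by rewrite big_geq.
rewrite big_nat_recr //= IH; case: (leqP a n) => h /=; lia.
Qed.

Lemma step_form n (d : nat -> nat) :
  (forall j, j.+1 < n -> d j <= d j.+1) -> (forall j, j < n -> d j <= 2) ->
  exists al be, [/\ al <= be, be <= n & forall k, k < n -> d k = (al <= k) + (be <= k)].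
Proof.
elim: n => [|n IH] Hm Hb; first by exists 0, 0.
have [al [be [h1 h2 h3]]] := IH (fun j hj => Hm j (leq_trans hj (leqnSn n)))
   (fun j hj => Hb j (leq_trans hj (leqnSn n))).
have dn := Hb n (ltnSn n).
have Hprev : 0 < n -> d n.-1 <= d n by move=> h; rewrite -{2}(prednK h); apply: Hm; lia.
have Hpv : 0 < n -> d n.-1 = (al <= n.-1) + (be <= n.-1) by move=> h; apply: h3; lia.
case E: (d n) => [|[|[|x]]]; last by rewrite E in dn.
-
  have hal : n <= al.
    case: (posnP n) => [->//|hn]; have := Hprev hn; have := Hpv hn; rewrite E => e1 e2.
    case: (boolP (al <= n.-1)) => ha; rewrite ?ha ?(negbTE ha) /= in e1; lia.
  exists n.+1, n.+1; split => // k hk.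
  case: (ltnP k n) => hkn; last by rewrite (_ : k = n); [rewrite E ltnn | lia].
  rewrite h3 //; have -> : (al <= k) = false by apply/negbTE; rewrite -ltnNge; lia.
  have -> : (be <= k) = false by apply/negbTE; rewrite -ltnNge; lia.
  by have -> : (n.+1 <= k) = false by apply/negbTE; rewrite -ltnNge; lia.
-
  have hbe : n <= be.
    case: (posnP n) => [->//|hn]; have := Hprev hn; have := Hpv hn; rewrite E => e1 e2.
    case: (boolP (al <= n.-1)) => ha; case: (boolP (be <= n.-1)) => hb; rewrite ?ha ?hb ?(negbTE ha) ?(negbTE hb) /= in e1; lia.
  exists al, n.+1; split => //; first lia.
  move=> k hk; case: (ltnP k n) => hkn.
    rewrite h3 //; have -> : (be <= k) = false by apply/negbTE; rewrite -ltnNge; lia.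
    by have -> : (n.+1 <= k) = false by apply/negbTE; rewrite -ltnNge; lia.
  rewrite (_ : k = n); last lia.
  by rewrite E ltnn (leq_trans h1 h2).
-
  exists al, be; split => //; first lia.
  move=> k hk; case: (ltnP k n) => hkn; first by rewrite h3.
  rewrite (_ : k = n); last lia.
  by rewrite E (leq_trans h1 h2) h2.
Qed.

Lemma filt_id (s : seq nat) (p : pred nat) : (forall x, x \in s -> p x) -> filter p s = s.
Proof. by move=> h; apply/all_filterP/allP. Qed.

Lemma cols_eq N al be : al < be -> be <= N.+1 ->
  tauc_cols N al be = iota 0 al ++ iota al.+1 (be - al.+1) ++ iota be.+1 (N.+1 - be).
Proof.
move=> h1 h2.
have E : iota 0 N.+2 = iota 0 al ++ al :: iota al.+1 (be - al.+1) ++ be :: iota be.+1 (N.+1 - be).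
  have -> : N.+2 = al + (1 + (be - al.+1 + (1 + (N.+1 - be)))) by lia.
  rewrite !iotaD /= add0n addn1; congr (_ ++ _ :: _ ++ _ :: _); try (congr iota; lia).
  lia.
rewrite /tauc_cols E !filter_cat /= (eqxx al) /= !filter_cat /= (eqxx be) andbF /=.
rewrite !filt_id // => x; rewrite mem_iota => /andP[ha hb]; apply/andP; split; apply/eqP; lia.
Qed.

Lemma nth_cols N al be k : al < be -> be <= N.+1 -> k < N ->
  nth 0 (tauc_cols N al be) k = k + (al <= k) + (be <= k.+1).
Proof.
move=> h1 h2 hk; rewrite cols_eq // !nth_cat !size_iota.
case: (ltnP k al) => ha.
  rewrite nth_iota // (_ : (be <= k.+1) = false); last by apply/negbTE; rewrite -ltnNge; lia.
  by rewrite !addn0 add0n.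

case: (ltnP (k - al) (be - al.+1)) => hb.
  rewrite nth_iota // (_ : (be <= k.+1) = false); last by apply/negbTE; rewrite -ltnNge; lia.
  rewrite /=; lia.
rewrite nth_iota; last lia.
rewrite (_ : (be <= k.+1) = true); last by apply/idP; lia.
rewrite /=; lia.
Qed.

Lemma sum_two n (f : nat -> nat) j : j.+1 < n ->
  \sum_(0 <= k < n) f k = f j + f j.+1 + \sum_(k < n | ((k : nat) != j) && ((k : nat) != j.+1)) f k.
Proof.
move=> hj; rewrite big_mkord (bigD1 (Ordinal (ltnW hj))) //= (bigD1 (Ordinal hj)) //=; last first.
  by rewrite neq_ltn ltnSn orbT.
by rewrite addnA.
Qed.

Definition mv (d : nat -> nat) j := fun k => if k == j then (d j).-1 else if k == j.+1 then (d j.+1).+1 else d k.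

Lemma sum_mv n (F : nat -> nat -> nat) d j : j.+1 < n ->
  \sum_(0 <= k < n) F k (mv d j k) + (F j (d j) + F j.+1 (d j.+1)) =
  \sum_(0 <= k < n) F k (d k) + (F j (d j).-1 + F j.+1 (d j.+1).+1).
Proof.
move=> hj; rewrite !(sum_two _ hj).
have -> : \sum_(k < n | ((k : nat) != j) && ((k : nat) != j.+1)) F k (mv d j k) =
          \sum_(k < n | ((k : nat) != j) && ((k : nat) != j.+1)) F k (d k).
  by apply: eq_bigr => k /andP[h1 h2]; rewrite /mv (negbTE h1) (negbTE h2).
rewrite /mv eqxx (_ : (j.+1 == j) = false); last by apply/negbTE; rewrite neq_ltn ltnSn orbT.
rewrite eqxx; lia.
Qed.

Lemma pot_bound N (d : nat -> nat) : (forall j, j < N -> d j <= 2) ->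
  \sum_(0 <= k < N) k * d k <= N * (N * 2).
Proof.
move=> hb; rewrite big_mkord.
apply: (@leq_trans (\sum_(k < N) (N * 2))); last by rewrite sum_nat_const card_ord.
apply: leq_sum => k _; apply: leq_mul; [exact: ltnW | exact: hb].
Qed.

Lemma desc_step (R : realType) N (f : 'I_N -> nat -> R)
  (hconv : forall i t, (f i t.+1 + f i t.+1 <= f i t + f i t.+2)%R)
  (d : nat -> nat) j : j.+1 < N -> d j.+1 < d j -> (forall k, k < N -> d k <= 2) ->
  [/\ forall k, k < N -> mv d j k <= 2,
      \sum_(0 <= k < N) mv d j k = \sum_(0 <= k < N) d k,
      \sum_(0 <= k < N) (mv d j k == 2) <= \sum_(0 <= k < N) (d k == 2),
      \sum_(0 <= k < N) k * mv d j k = (\sum_(0 <= k < N) k * d k).+1 &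
      (Phi f (fun k => (k + d k)%N) <= Phi f (fun k => (k + mv d j k)%N))%R].
Proof.
move=> hj hd hb.
have hbj := hb j (ltnW hj); have hbj1 := hb j.+1 hj.
split.
- move=> k hk; rewrite /mv; case: eqP => _; first lia.
  case: eqP => _; [lia | exact: hb].
- have := sum_mv (fun _ x => x) d hj; lia.
- have := sum_mv (fun _ x => (x == 2 : nat)) d hj.
  move: hd hbj hbj1; move: (d j) (d j.+1) => [|[|[|x]]] [|[|[|y]]] //= _ _ _; lia.
- have := sum_mv (fun k x => k * x) d hj.
  move: hd; move: (d j) (d j.+1) => [|x] y //= hxy; nia.
- apply: (Phi_move hconv (a := j) (b := j.+1)) => //.
  + exact: ltnW.
  + by rewrite neq_ltn ltnSn.
  + by move=> k h1 h2; rewrite /mv (negbTE h1) (negbTE h2).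
  + rewrite /mv eqxx (_ : (j.+1 == j) = false); last by apply/negbTE; rewrite neq_ltn ltnSn orbT.
    rewrite eqxx.
    case: (ltnP (d j.+1).+1 (d j)) => h.
      by left; split; lia.
    by right; split; [lia | split; [lia | split; lia]].
Qed.

Lemma base (R : realType) N (f : 'I_N -> nat -> R) k2 k3 (d : nat -> nat) :
  ~~ [exists j : 'I_N, (j.+1 < N) && (d j.+1 < d j)] ->
  (forall j, j < N -> d j <= 2) -> \sum_(0 <= j < N) d j = k2 + k3 ->
  \sum_(0 <= j < N) (d j == 2) <= k2 -> \sum_(0 <= j < N) (d j == 2) <= k3 ->
  exists al be, [/\ al <= be, be <= N,
     (Phi f (fun j => (j + d j)%N) <= Phi f (nth 0 (tauc_cols N al be.+1)))%R,
     k2 + k3 = (N - al) + (N - be) & (N - be <= k2) && (N - be <= k3)].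
Proof.
move=> hnd hb hs h2 h3.
have hm : forall j, j.+1 < N -> d j <= d j.+1.
  move=> j hj; move/existsPn: hnd => /(_ (Ordinal (ltnW hj))) /=; rewrite hj /= -leqNgt //.
have [al [be [e1 e2 e3]]] := step_form hm hb.
have c2 : \sum_(0 <= j < N) (d j == 2) = N - be.
  rewrite -(sum_ge N be); apply: eq_big_nat => k /andP[_ hk]; rewrite e3 //.
  by case: (leqP al k) => ha; case: (leqP be k) => hb'' //=; lia.
have c1 : \sum_(0 <= j < N) d j = (N - al) + (N - be).
  rewrite -(sum_ge N be) -(sum_ge N al) -big_split /=.
  by apply: eq_big_nat => k /andP[_ hk]; rewrite e3.
exists al, be; split => //.
- rewrite (@Phi_ext _ _ f _ (nth 0 (tauc_cols N al be.+1))) //.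
  move=> k hk; rewrite nth_cols; [|lia|lia|lia].
  by rewrite e3 // ltnS addnA.
- by rewrite -hs c1.
- by rewrite -c2 h2 h3.
Qed.

Lemma sort_main (R : realType) N (f : 'I_N -> nat -> R)
  (hconv : forall i t, (f i t.+1 + f i t.+1 <= f i t + f i t.+2)%R) k2 k3 (d : nat -> nat) :
  (forall j, j < N -> d j <= 2) -> \sum_(0 <= j < N) d j = k2 + k3 ->
  \sum_(0 <= j < N) (d j == 2) <= k2 -> \sum_(0 <= j < N) (d j == 2) <= k3 ->
  exists al be, [/\ al <= be, be <= N,
     (Phi f (fun j => (j + d j)%N) <= Phi f (nth 0 (tauc_cols N al be.+1)))%R,
     k2 + k3 = (N - al) + (N - be) & (N - be <= k2) && (N - be <= k3)].
Proof.
move: d; suff H : forall M d, N * (N * 2) - \sum_(0 <= k < N) k * d k <= M ->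
  (forall j, j < N -> d j <= 2) -> \sum_(0 <= j < N) d j = k2 + k3 ->
  \sum_(0 <= j < N) (d j == 2) <= k2 -> \sum_(0 <= j < N) (d j == 2) <= k3 ->
  exists al be, [/\ al <= be, be <= N,
     (Phi f (fun j => (j + d j)%N) <= Phi f (nth 0 (tauc_cols N al be.+1)))%R,
     k2 + k3 = (N - al) + (N - be) & (N - be <= k2) && (N - be <= k3)].
  by move=> d; apply: (H _ d (leqnn _)).
elim=> [|M IH] d hM hb hs h2 h3.
all: case: (boolP [exists j : 'I_N, (j.+1 < N) && (d j.+1 < d j)]).
- case/existsP => j /andP[hj hdj].
  have [hb' hs' hc' hp hphi] := desc_step hconv hj hdj hb.
  have := pot_bound hb'; lia.
- move=> hnd; apply: base => //.
- case/existsP => j /andP[hj hdj].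
  have [hb' hs' hc' hp hphi] := desc_step hconv hj hdj hb.
  have [al [be [q1 q2 q3 q4 q5]]] := IH (mv d j) ltac:(lia) hb' ltac:(lia) ltac:(lia) ltac:(lia).
  by exists al, be; split => //; apply: le_trans q3.
- move=> hnd; apply: base => //.
Qed.

Open Scope ring_scope.

Ltac nomax x := lazymatch x with context [Num.max _ _] => fail | _ => idtac end.
Ltac kill_max := repeat match goal with |- context [Num.max ?x ?y] => nomax x; nomax y; case: (leP x y) => ? end.

Lemma key_eq (R : realType) (E F P a2 a3 : R) :
  (forall e2 e3 : bool,
     Num.max (E + (e2 + e3)%N%:R * P) (F - (e2 + e3)%N%:R * P) - e2%:R * a2 - e3%:R * a3 <=
     Num.max (E + Num.max 0 (P - a2) + Num.max 0 (P - a3))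
             (F + Num.max 0 (- P - a2) + Num.max 0 (- P - a3))) /\
  exists e2 e3 : bool,
     Num.max (E + Num.max 0 (P - a2) + Num.max 0 (P - a3))
             (F + Num.max 0 (- P - a2) + Num.max 0 (- P - a3)) =
     Num.max (E + (e2 + e3)%N%:R * P) (F - (e2 + e3)%N%:R * P) - e2%:R * a2 - e3%:R * a3.
Proof.
have mx : forall (b : bool) (x : R), b%:R * x <= Num.max 0 x.
  by move=> [] x; rewrite le_max ?mul1r ?mul0r lexx ?orbT.
split.
  move=> e2 e3.
  have := mx e2 (P - a2); have := mx e3 (P - a3); have := mx e2 (- P - a2); have := mx e3 (- P - a3).
  case: (leP (E + (e2 + e3)%N%:R * P) (F - (e2 + e3)%N%:R * P)) => hxy;
  move: hxy; case: e2; case: e3 => /= hxy q1 q2 q3 q4;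
  rewrite le_max; apply/orP; (left; lra) || (right; lra).
match goal with |- exists _ _, Num.max ?A ?B = _ => case: (leP B A) => hAB end.
  exists (0 <= P - a2), (0 <= P - a3).
  have := mx (0 <= P - a2) (- P - a2); have := mx (0 <= P - a3) (- P - a3); move: hAB.
  set e2 := (0 <= P - a2); set e3 := (0 <= P - a3).
  case: (leP (E + (e2 + e3)%N%:R * P) (F - (e2 + e3)%N%:R * P)) => hxy; move: hxy;
  rewrite /e2 /e3; case: (leP 0 (P - a2)) => h2; case: (leP 0 (P - a3)) => h3 /= hxy hAB q1 q2; lra.
exists (0 <= - P - a2), (0 <= - P - a3).
have := mx (0 <= - P - a2) (P - a2); have := mx (0 <= - P - a3) (P - a3); move: hAB.
set e2 := (0 <= - P - a2); set e3 := (0 <= - P - a3).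
case: (leP (E + (e2 + e3)%N%:R * P) (F - (e2 + e3)%N%:R * P)) => hxy; move: hxy;
rewrite /e2 /e3; case: (leP 0 (- P - a2)) => h2; case: (leP 0 (- P - a3)) => h3 /= hxy hAB q1 q2; lra.
Qed.


Lemma eta_sh (R : realType) N a1 a2 a3 (p c : 'I_N -> R) i l m n (t : int) (k : nat) :
  eta a1 a2 a3 p c i l m n (t + k%:Z) = eta a1 a2 a3 p c i l m n t + k%:R * p i.
Proof. rewrite /eta intrD (_ : (k%:Z)%:~R = k%:R :> R) //; ring. Qed.

Lemma eta'_sh (R : realType) N a1 a2 a3 (p c : 'I_N -> R) i l m n (t : int) (k : nat) :
  eta' a1 a2 a3 p c i l m n (t + k%:Z) = eta' a1 a2 a3 p c i l m n t - k%:R * p i.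
Proof. rewrite /eta' intrD (_ : (k%:Z)%:~R = k%:R :> R) //; ring. Qed.

Lemma phi_opt (R : realType) N a1 a2 a3 (p c c' : 'I_N -> R) i l m n (t : int) :
  (forall e2 e3 : bool, phi a1 a2 a3 p c c' i l m n (t + (e2 + e3)%N%:Z) - e2%:R * a2 - e3%:R * a3
      <= phi a1 a2 a3 p c c' i l (m + 1) (n + 1) t) /\
  exists e2 e3 : bool, phi a1 a2 a3 p c c' i l (m + 1) (n + 1) t =
      phi a1 a2 a3 p c c' i l m n (t + (e2 + e3)%N%:Z) - e2%:R * a2 - e3%:R * a3.
Proof.
have em : eta a1 a2 a3 p c i l (m + 1) (n + 1) t = eta a1 a2 a3 p c i l m n t
   + Num.max 0 (p i - a2) + Num.max 0 (p i - a3) by rewrite /eta !intrD; ring.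
have em' : eta' a1 a2 a3 p c' i l (m + 1) (n + 1) t = eta' a1 a2 a3 p c' i l m n t
   + Num.max 0 (- p i - a2) + Num.max 0 (- p i - a3) by rewrite /eta' !intrD; ring.
have [k1 k2] := key_eq (eta a1 a2 a3 p c i l m n t) (eta' a1 a2 a3 p c' i l m n t) (p i) a2 a3.
rewrite /phi em em'; split.
  by move=> e2 e3; rewrite eta_sh eta'_sh; apply: k1.
by case: k2 => e2 [e3 h]; exists e2, e3; rewrite eta_sh eta'_sh.
Qed.

Lemma phi_conv (R : realType) N a1 a2 a3 (p c c' : 'I_N -> R) i l m n (s : int) (t : nat) :
  phi a1 a2 a3 p c c' i l m n (s + t.+1%:Z) + phi a1 a2 a3 p c c' i l m n (s + t.+1%:Z) <=
  phi a1 a2 a3 p c c' i l m n (s + t%:Z) + phi a1 a2 a3 p c c' i l m n (s + t.+2%:Z).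
Proof.
rewrite -[t.+2]addn2 -[t.+1]addn1 !PoszD !addrA /phi !eta_sh !eta'_sh.
kill_max; lra.
Qed.

Definition Tw (R : realType) N (a1 a2 a3 : R) (p c c' : 'I_N -> R) l m n s (S w : nat) :=
  tauc a1 a2 a3 p c c' l m n s (N - (S - w)) (N + 1 - w).

Lemma Psi_ge (R : realType) N (a1 a2 a3 : R) (p c c' : 'I_N -> R) l m n s k2 k3 w :
  (k2 <= N)%N -> (k3 <= N)%N -> (w <= k2)%N -> (w <= k3)%N -> (k2 + k3 - w <= N)%N ->
  Tw a1 a2 a3 p c c' l m n s (k2 + k3) w <= Psi a1 a2 a3 p c c' l m n s k2 k3.
Proof.
move=> hk2 hk3 h2 h3 hS; rewrite /Psi /Tw.
case: ifP => C1.
  have hi : (k2 - w <= N - k3)%N by lia.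
  apply: (le_trans _ (maxupto_ge _ hi)) => /=.
  rewrite (_ : N - k3 - (k2 - w) = N - (k2 + k3 - w))%N; last lia.
  rewrite (_ : N - k2 + 1 + (k2 - w) = N + 1 - w)%N; last lia.
  exact: lexx.
case: ifP => C2.
  have hi : (w <= k2)%N by lia.
  apply: (le_trans _ (maxupto_ge _ hi)) => /=.
  rewrite (_ : N - k2 - k3 + w = N - (k2 + k3 - w))%N; last lia.
  exact: lexx.
case: ifP => C3.
  have hi : (k3 - w <= N - k2)%N by lia.
  apply: (le_trans _ (maxupto_ge _ hi)) => /=.
  rewrite (_ : N - k2 - (k3 - w) = N - (k2 + k3 - w))%N; last lia.
  rewrite (_ : N - k3 + 1 + (k3 - w) = N + 1 - w)%N; last lia.
  exact: lexx.
have hi : (w <= k3)%N by lia.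
apply: (le_trans _ (maxupto_ge _ hi)) => /=.
rewrite (_ : N - k2 - k3 + w = N - (k2 + k3 - w))%N; last lia.
exact: lexx.
Qed.

Lemma Psi_le (R : realType) N (a1 a2 a3 : R) (p c c' : 'I_N -> R) l m n s k2 k3 z :
  (k2 <= N)%N -> (k3 <= N)%N ->
  (forall w, (w <= k2)%N -> (w <= k3)%N -> (k2 + k3 - w <= N)%N ->
      Tw a1 a2 a3 p c c' l m n s (k2 + k3) w <= z) ->
  Psi a1 a2 a3 p c c' l m n s k2 k3 <= z.
Proof.
move=> hk2 hk3 H; rewrite /Psi.
case: ifP => C1.
  apply: maxupto_le => i hi; have := H (k2 - i)%N ltac:(lia) ltac:(lia) ltac:(lia); rewrite /Tw.
  rewrite (_ : N - (k2 + k3 - (k2 - i)) = N - k3 - i)%N; last lia.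
  rewrite (_ : N + 1 - (k2 - i) = N - k2 + 1 + i)%N; last lia.
  exact.
case: ifP => C2.
  apply: maxupto_le => i hi; have := H i ltac:(lia) ltac:(lia) ltac:(lia); rewrite /Tw.
  rewrite (_ : N - (k2 + k3 - i) = N - k2 - k3 + i)%N; last lia.
  exact.
case: ifP => C3.
  apply: maxupto_le => i hi; have := H (k3 - i)%N ltac:(lia) ltac:(lia) ltac:(lia); rewrite /Tw.
  rewrite (_ : N - (k2 + k3 - (k3 - i)) = N - k2 - i)%N; last lia.
  rewrite (_ : N + 1 - (k3 - i) = N - k3 + 1 + i)%N; last lia.
  exact.
apply: maxupto_le => i hi; have := H i ltac:(lia) ltac:(lia) ltac:(lia); rewrite /Tw.
rewrite (_ : N - (k2 + k3 - i) = N - k2 - k3 + i)%N; last lia.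
exact.
Qed.

Lemma tauc_sym (R : realType) N (a1 a2 a3 : R) (p c c' : 'I_N -> R) l m n s al be :
  tauc a1 a2 a3 p c c' l m n s al be = tauc a1 a2 a3 p c c' l m n s be al.
Proof.
have hc : tauc_cols N al be = tauc_cols N be al.
  by rewrite /tauc_cols; apply: eq_filter => j; rewrite andbC.
by rewrite /tauc hc.
Qed.

Lemma rec_gt (R : realType) N (a1 a2 a3 : R) (p c c' : 'I_N -> R) l m n s k2 k3 :
  (1 <= k2 <= N)%N -> (1 <= k3 <= N)%N -> (k2 > k3)%N ->
  Psi a1 a2 a3 p c c' l m n s k2.-1 k3 =
  Num.max (Psi a1 a2 a3 p c c' l m n s k2 k3.-1) (tauc a1 a2 a3 p c c' l m n s (N - k3 + 1) (N - k2 + 1)).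
Proof.
move=> /andP[h1 h2] /andP[h3 h4] hgt.
have eS : (k2 + k3.-1 = k2.-1 + k3)%N by lia.
have eT : tauc a1 a2 a3 p c c' l m n s (N - k3 + 1) (N - k2 + 1) = Tw a1 a2 a3 p c c' l m n s (k2.-1 + k3) k3.
  rewrite tauc_sym /Tw (_ : N - (k2.-1 + k3 - k3) = N - k2 + 1)%N; last lia.
  by rewrite (_ : N + 1 - k3 = N - k3 + 1)%N; last lia.
rewrite eT; apply/le_anti/andP; split.
  apply: Psi_le; [lia | lia |] => w hw2 hw3 hwS; rewrite le_max; apply/orP.
  case: (ltnP w k3) => hw.
    left; rewrite -eS; apply: Psi_ge; lia.
  right; rewrite (_ : w = k3); [exact: lexx | lia].
rewrite ge_max; apply/andP; split.
  apply: Psi_le; [lia | lia |] => w hw2 hw3 hwS; rewrite eS; apply: Psi_ge; lia.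
apply: Psi_ge; lia.
Qed.

Lemma rec_eq (R : realType) N (a1 a2 a3 : R) (p c c' : 'I_N -> R) l m n s k2 k3 :
  (1 <= k2 <= N)%N -> (1 <= k3 <= N)%N -> k2 = k3 ->
  Psi a1 a2 a3 p c c' l m n s k2.-1 k3 = Psi a1 a2 a3 p c c' l m n s k2 k3.-1.
Proof.
move=> /andP[h1 h2] /andP[h3 h4] he.
have eS : (k2 + k3.-1 = k2.-1 + k3)%N by lia.
apply/le_anti/andP; split.
  apply: Psi_le; [lia | lia |] => w hw2 hw3 hwS; rewrite -eS; apply: Psi_ge; lia.
apply: Psi_le; [lia | lia |] => w hw2 hw3 hwS; rewrite eS; apply: Psi_ge; lia.
Qed.

Lemma rec_lt (R : realType) N (a1 a2 a3 : R) (p c c' : 'I_N -> R) l m n s k2 k3 :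
  (1 <= k2 <= N)%N -> (1 <= k3 <= N)%N -> (k2 < k3)%N ->
  Num.max (Psi a1 a2 a3 p c c' l m n s k2.-1 k3) (tauc a1 a2 a3 p c c' l m n s (N - k2 + 1) (N - k3 + 1)) =
  Psi a1 a2 a3 p c c' l m n s k2 k3.-1.
Proof.
move=> /andP[h1 h2] /andP[h3 h4] hlt.
have eS : (k2 + k3.-1 = k2.-1 + k3)%N by lia.
have eT : tauc a1 a2 a3 p c c' l m n s (N - k2 + 1) (N - k3 + 1) = Tw a1 a2 a3 p c c' l m n s (k2 + k3.-1) k2.
  rewrite tauc_sym /Tw (_ : N - (k2 + k3.-1 - k2) = N - k3 + 1)%N; last lia.
  by rewrite (_ : N + 1 - k2 = N - k2 + 1)%N; last lia.
rewrite eT; apply/le_anti/andP; split.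
  rewrite ge_max; apply/andP; split.
    apply: Psi_le; [lia | lia |] => w hw2 hw3 hwS; rewrite -eS; apply: Psi_ge; lia.
  apply: Psi_ge; lia.
apply: Psi_le; [lia | lia |] => w hw2 hw3 hwS; rewrite le_max; apply/orP.
case: (ltnP w k2) => hw.
  left; rewrite eS; apply: Psi_ge; lia.
right; rewrite (_ : w = k2); [exact: lexx | lia].
Qed.

Lemma sum_cfg (R : realType) N (f : 'I_N -> nat -> R) (pi : 'S_N) (e2 e3 : nat -> bool) (a2 a3 : R) :
  \sum_i (f i (pi i + e2 (pi i) + e3 (pi i))%N - (e2 (pi i))%:R * a2 - (e3 (pi i))%:R * a3) =
  \sum_i (\matrix_(i, k) f i (k + e2 k + e3 k)%N) i (pi i)
    - (\sum_(0 <= k < N) e2 k)%N%:R * a2 - (\sum_(0 <= k < N) e3 k)%N%:R * a3.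
Proof.
rewrite !sumrB; congr (_ - _ - _).
- by apply: eq_bigr => i _; rewrite mxE.
- rewrite big_mkord natr_sum mulr_suml.
  by rewrite [RHS](reindex_inj (@perm_inj _ pi)).
- rewrite big_mkord natr_sum mulr_suml.
  by rewrite [RHS](reindex_inj (@perm_inj _ pi)).
Qed.

Lemma tau_ge_cfg (R : realType) N (a1 a2 a3 : R) (p c c' : 'I_N -> R) l m n s (e2 e3 : nat -> bool) :
  Phi (fun i t => phi a1 a2 a3 p c c' i l m n (s + t%:Z)) (fun k => (k + e2 k + e3 k)%N)
   - (\sum_(0 <= k < N) e2 k)%N%:R * a2 - (\sum_(0 <= k < N) e3 k)%N%:R * a3
  <= tau a1 a2 a3 p c c' l (m + 1) (n + 1) s.
Proof.
set f := fun i t => _.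
rewrite /Phi; case: (UP_ex (\matrix_(i < N, k < N) f i (k + e2 k + e3 k)%N)) => pi ->.
rewrite -sum_cfg.
apply: le_trans (UP_ge _ pi).
apply: ler_sum => i _; rewrite mxE /f.
have [h _] := phi_opt a1 a2 a3 p c c' i l m n (s + (pi i)%:Z).
have := h (e2 (pi i)) (e3 (pi i)).
by move=> hh; rewrite -addnA PoszD addrA.
Qed.

Lemma main_ge (R : realType) N (a1 a2 a3 : R) (p c c' : 'I_N -> R) l m n s :
  maxupto N (fun k2 => maxupto N (fun k3 =>
      Psi a1 a2 a3 p c c' l m n s k2 k3 - k2%:R * a2 - k3%:R * a3))
  <= tau a1 a2 a3 p c c' l (m + 1) (n + 1) s.
Proof.
apply: maxupto_le => k2 hk2; apply: maxupto_le => k3 hk3.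
suff h : Psi a1 a2 a3 p c c' l m n s k2 k3 <= tau a1 a2 a3 p c c' l (m + 1) (n + 1) s + k2%:R * a2 + k3%:R * a3 by lra.
apply: Psi_le => // w hw2 hw3 hwS.
pose al := (N - (k2 + k3 - w))%N.
pose e2 := fun k => (N - k2 <= k)%N.
pose e3 := fun k => (N - w <= k)%N || ((al <= k)%N && (k < N - k2)%N).
have pt : forall k, (e3 k + e2 k = (N - w <= k) + (al <= k))%N.
  move=> k; rewrite /e3 /e2 /al.
  case: (leqP (N - k2) k) => q1; case: (leqP (N - w) k) => q2;
  case: (leqP (N - (k2 + k3 - w)) k) => q3 /=; lia.
have pt2 : forall k, (k < N)%N -> (k + e2 k + e3 k = k + (al <= k) + (N + 1 - w <= k.+1))%N.
  move=> k hk; rewrite /e3 /e2 /al.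
  case: (leqP (N - k2) k) => q1; case: (leqP (N - w) k) => q2;
  case: (leqP (N - (k2 + k3 - w)) k) => q3; case: (leqP (N + 1 - w) k.+1) => q4 /=; lia.
have s2 : (\sum_(0 <= k < N) e2 k = k2)%N by rewrite sum_ge; lia.
have s3 : (\sum_(0 <= k < N) e3 k = k3)%N.
  have : (\sum_(0 <= k < N) (e3 k + e2 k) = \sum_(0 <= k < N) ((N - w <= k) + (al <= k)))%N.
    by apply: eq_bigr => k _; exact: pt.
  rewrite !big_split /= !sum_ge; lia.
have := tau_ge_cfg a1 a2 a3 p c c' l m n s e2 e3; rewrite s2 s3.
have -> : Phi (fun i t => phi a1 a2 a3 p c c' i l m n (s + t%:Z)) (fun k => (k + e2 k + e3 k)%N)
   = Tw a1 a2 a3 p c c' l m n s (k2 + k3) w.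
  rewrite (_ : Tw a1 a2 a3 p c c' l m n s (k2 + k3) w =
     Phi (fun i t => phi a1 a2 a3 p c c' i l m n (s + t%:Z)) (nth 0 (tauc_cols N al (N + 1 - w)))) //.
  apply: Phi_ext => k hk; rewrite pt2 // nth_cols //; rewrite /al; lia.
move=> h; lra.
Qed.

Lemma sum_bool_le N (e : nat -> bool) : (\sum_(0 <= k < N) e k <= N)%N.
Proof.
apply: (@leq_trans (\sum_(0 <= k < N) 1)%N); last by rewrite sum_nat_const_nat subn0 muln1.
by apply: leq_sum => k _; apply: leq_b1.
Qed.

Lemma main_le (R : realType) N (a1 a2 a3 : R) (p c c' : 'I_N -> R) l m n s :
  tau a1 a2 a3 p c c' l (m + 1) (n + 1) s <=
  maxupto N (fun k2 => maxupto N (fun k3 =>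
      Psi a1 a2 a3 p c c' l m n s k2 k3 - k2%:R * a2 - k3%:R * a3)).
Proof.
set f := fun i t => phi a1 a2 a3 p c c' i l m n (s + t%:Z).
have hconv : forall i t, f i t.+1 + f i t.+1 <= f i t + f i t.+2.
  by move=> i t; apply: phi_conv.
rewrite /tau; case: (UP_ex (\matrix_(i < N, j < N) phi a1 a2 a3 p c c' i l (m + 1) (n + 1) (s + j%:Z))) => pi ->.
have hx : forall i, exists e : bool * bool,
    phi a1 a2 a3 p c c' i l (m + 1) (n + 1) (s + (pi i)%:Z) =
    f i (pi i + e.1 + e.2)%N - (e.1)%:R * a2 - (e.2)%:R * a3.
  move=> i; have [_ [e2 [e3 h]]] := phi_opt a1 a2 a3 p c c' i l m n (s + (pi i)%:Z).
  by exists (e2, e3); rewrite h /f /= -addnA (PoszD (pi i)) addrA.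
have [g hg] := fin_all_exists hx.
pose E2 := fun j : nat => if @insub _ (fun x => x < N)%N 'I_N j is Some k then (g ((pi^-1)%g k)).1 else false.
pose E3 := fun j : nat => if @insub _ (fun x => x < N)%N 'I_N j is Some k then (g ((pi^-1)%g k)).2 else false.
have hE2 : forall i, E2 (pi i) = (g i).1 by move=> i; rewrite /E2 valK permK.
have hE3 : forall i, E3 (pi i) = (g i).2 by move=> i; rewrite /E3 valK permK.
have -> : \sum_i (\matrix_(i < N, j < N) phi a1 a2 a3 p c c' i l (m + 1) (n + 1) (s + j%:Z)) i (pi i)
   = \sum_i (f i (pi i + E2 (pi i) + E3 (pi i))%N - (E2 (pi i))%:R * a2 - (E3 (pi i))%:R * a3).
  by apply: eq_bigr => i _; rewrite mxE hg hE2 hE3.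
rewrite sum_cfg.
set k2 := (\sum_(0 <= k < N) E2 k)%N; set k3 := (\sum_(0 <= k < N) E3 k)%N.
have hk2 : (k2 <= N)%N by apply: sum_bool_le.
have hk3 : (k3 <= N)%N by apply: sum_bool_le.
have hUP := UP_ge (\matrix_(i < N, k < N) f i (k + E2 k + E3 k)%N) pi.
have [al [be [q1 q2 q3 q4 /andP[q5 q6]]]] :=
  sort_main hconv (d := fun j => (E2 j + E3 j)%N) (k2 := k2) (k3 := k3)
    (fun j _ => leq_add (leq_b1 _) (leq_b1 _))
    ltac:(by rewrite big_split)
    ltac:(by apply: leq_sum => j _; case: (E2 j); case: (E3 j))
    ltac:(by apply: leq_sum => j _; case: (E2 j); case: (E3 j)).
have hPsi : Phi f (fun k => (k + E2 k + E3 k)%N) <= Psi a1 a2 a3 p c c' l m n s k2 k3.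
  rewrite (@Phi_ext _ _ f _ (fun j => (j + (E2 j + E3 j))%N)); last by move=> k _; rewrite addnA.
  apply: le_trans q3 _.
  have := Psi_ge a1 a2 a3 p c c' l m n s hk2 hk3 q5 q6 ltac:(lia).
  rewrite /Tw (_ : N - (k2 + k3 - (N - be)) = al)%N; last lia.
  by rewrite (_ : N + 1 - (N - be) = be.+1)%N; last lia.
apply: le_trans (maxupto_ge _ hk2).
apply: le_trans (maxupto_ge _ hk3) => /=.
rewrite /Phi in hPsi.
lra.
Qed.

Unset Implicit Arguments. Set Strict Implicit.
Theorem lemma7 (R : realType) (N : nat) (a1 a2 a3 : R) (p c c' : 'I_N -> R)
    (l m n s : int) :
  (1 <= N)%N -> a1 > a2 -> a2 > a3 ->
  tau a1 a2 a3 p c c' l (m + 1) (n + 1) s =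
    maxupto N (fun k2 => maxupto N (fun k3 =>
      Psi a1 a2 a3 p c c' l m n s k2 k3 - k2%:R * a2 - k3%:R * a3))
  /\ (forall k2 k3 : nat, (1 <= k2 <= N)%N -> (1 <= k3 <= N)%N ->
      [/\ (k2 > k3)%N ->
            Psi a1 a2 a3 p c c' l m n s k2.-1 k3 =
            Num.max (Psi a1 a2 a3 p c c' l m n s k2 k3.-1)
                    (tauc a1 a2 a3 p c c' l m n s (N - k3 + 1) (N - k2 + 1)),
          k2 = k3 ->
            Psi a1 a2 a3 p c c' l m n s k2.-1 k3 =
            Psi a1 a2 a3 p c c' l m n s k2 k3.-1
        & (k2 < k3)%N ->
            Num.max (Psi a1 a2 a3 p c c' l m n s k2.-1 k3)
                    (tauc a1 a2 a3 p c c' l m n s (N - k2 + 1) (N - k3 + 1)) =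
            Psi a1 a2 a3 p c c' l m n s k2 k3.-1]).
Proof.
move=> hN h12 h23; split.
  by apply/le_anti/andP; split; [exact: main_le | exact: main_ge].
move=> k2 k3 hk2 hk3; split.
- exact: rec_gt.
- exact: rec_eq.
- exact: rec_lt.
Qed.
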